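(* For every $\hbar\in H$, the product $\star_\hbar:\mathcal{P}(D_n)\times\mathcal{P}(D_n)\to\mathcal{P}(D_n)$ is continuous with respect to the locally convex topology on $\mathcal{P}(D_n)$ defined by the norms $\|\cdot\|_{D_n,\rho}$ for all $\rho>0$.
   Context: Fix $n\ge1$; indices $\mu,\nu\in\{0,\dots,n\}$. Multi-index conventions: $|P|=\sum P_i$, $P!=\prod P_i!$, $\binom{P}{T}=\prod\binom{P_i}{T_i}$, $\le$ and $\min$ componentwise, $P'=(P_1,\dots,P_n)$ for $P\in\mathbb{N}_0^{1+n}$. $D_n=Z/U(1)$ with $Z=\{r\in\mathbb{C}^{1+n}:-|r^0|^2+\sum_{i\ge1}|r^i|^2=-1\}$ and $U(1)$ acting by scalars; it is identified with the open unit ball of $\mathbb{C}^n$ via $w^i=r^i/r^0$, $w\cdot\bar w=\sum|w^i|^2$. For $P,Q\in\mathbb{N}_0^{1+n}$ with $|P|=|Q|$ let $f_{P,Q}([r])=r^P\bar r^Q=w^{P'}\bar w^{Q'}/(1-w\cdot\bar w)^{|P|}$, and $\mathcal{P}(D_n)$ their span. For $P,Q\in\mathbb{N}_0^n$ let $f_{r,P,Q}=w^P\bar w^Q/(1-w\cdot\bar w)^{\max\{|P|,|Q|\}}$; these form a basis of $\mathcal{P}(D_n)$. For $\rho>0$, $\|\sum a_{P,Q}f_{r,P,Q}\|_{D_n,\rho}=\sum|a_{P,Q}|\rho^{|P+Q|}$. $H=\mathbb{C}\setminus(\{0\}\cup\{-1/(2m):m\in\mathbb{N}\})$; $(z)_m=\prod_{k=0}^{m-1}(z+k)$.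 For $\hbar\in H$, $\star_\hbar$ is the bilinear product on $\mathcal{P}(D_n)$ obtained by reduction of the Wick product: with $d_{P,Q}=z^P\bar z^Q$ on $\mathbb{C}^{1+n}$, $d_{P,Q}\tilde\star_\hbar d_{R,S}=\sum_{T\le\min\{P,S\}}(-1)^{T_0}(2\hbar)^{|T|}T!\binom PT\binom ST d_{P+R-T,Q+S-T}$, and $\Psi_\hbar(d_{P,Q})=(2\hbar)^{|P|}(\frac1{2\hbar})_{|P|}f_{P,Q}$ (for $|P|=|Q|$), one sets $a\star_\hbar b=\Psi_\hbar(a'\tilde\star_\hbar b')$ for any $U(1)$-invariant polynomial preimages $a',b'$ of $a,b$ under $\Psi_\hbar$ (this is well defined). Explicitly $f_{P,Q}\star_\hbar f_{R,S}=\sum_{T\in\mathbb{N}_0^{1+n},T\le\min\{P,S\}}(-1)^{T_0}\frac{(\frac1{2\hbar})_{|P+S-T|}T!}{(\frac1{2\hbar})_{|P|}(\frac1{2\hbar})_{|S|}}\binom PT\binom ST f_{P+R-T,Q+S-T}$. *)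

(* Defs.v *)
From HB Require Import structures.
From mathcomp Require Import all_boot all_order all_algebra.
From mathcomp Require Import reals.
From mathcomp Require Import complex.
From mathcomp Require Import finmap.
From mathcomp.multinomials Require Import monalg.

Set Implicit Arguments.
Unset Strict Implicit.
Unset Printing Implicit Defensive.

Import Order.TTheory GRing.Theory Num.Theory.
Local Open Scope ring_scope.

Section Dn.
Variable R : realType.
Local Notation C := (R[i]).
Variable n : nat.

Definition mi (k : nat) := {ffun 'I_k -> nat}.
Definition msum k (P : mi k) : nat := (\sum_(i < k) P i)%N.
(* P' = (P_1,..,P_n) for P in N_0^{1+n}; coordinate 0 is P_0 *)
Definition mtail (P : mi n.+1) : mi n := [ffun i => P (lift ord0 i)].
Definition madd k (P Q : mi k) : mi k := [ffun i => (P i + Q i)%N].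
Definition msub k (P Q : mi k) : mi k := [ffun i => (P i - Q i)%N].
Definition mle k (P Q : mi k) : bool := [forall i, P i <= Q i]%N.
Definition mfact k (P : mi k) : nat := (\prod_(i < k) (P i)`!)%N.
Definition mbinom k (P T : mi k) : nat := (\prod_(i < k) 'C(P i, T i))%N.
Definition munit (l : 'I_n) : mi n := [ffun i => nat_of_bool (i == l)].

(* P(D_n), represented in its basis (f_{r,A,B})_{A,B in N_0^n}:
   an element is a finitely supported family of complex coefficients
   indexed by pairs (A,B). *)
Definition PD := {malg C[(mi n * mi n)%type]}.
Definition fr (A B : mi n) : PD := << (A, B) >>.

Definition normD (rho : R) (a : PD) : R :=
  \sum_(k <- msupp a) Normc.normc (a@_k) * rho ^+ msum (madd k.1 k.2).

(* hexp j A B is the expansion in the basis f_r of the function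
   w^A wbar^B / (1 - w.wbar)^(max(|A|,|B|) + j), computed via
   1/(1-x)^(m+1) = 1/(1-x)^m + x/(1-x)^(m+1), x = sum_l w^l wbar^l. *)
Fixpoint hexp (j : nat) (A B : mi n) : PD :=
  match j with
  | O => fr A B
  | j'.+1 => hexp j' A B
             + \sum_(l < n) hexp j' (madd A (munit l)) (madd B (munit l))
  end.

(* f_{P,Q} = w^{P'} wbar^{Q'} / (1 - w.wbar)^{|P|}  (for |P| = |Q|) *)
Definition fPQ (P Q : mi n.+1) : PD :=
  hexp (msum P - maxn (msum (mtail P)) (msum (mtail Q))) (mtail P) (mtail Q).

Definition poch (z : C) (m : nat) : C := \prod_(k < m) (z + k%:R).

Definition inH (hbar : C) : Prop :=
  hbar != 0 /\ forall m : nat, (0 < m)%N -> hbar != - (1 / (2 * m%:R)).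

(* the explicit formula for f_{P,Q} *_hbar f_{R,S}; the sum runs over all
   T in N_0^{1+n} with T <= min{P,S} (encoded as bounded finite functions) *)
Definition starPQ (hbar : C) (P Q R' S : mi n.+1) : PD :=
  let z := 1 / (2 * hbar) in
  let N := msum P in
  \sum_(t : {ffun 'I_n.+1 -> 'I_N.+1} |
          mle [ffun i => nat_of_ord (t i)] P && mle [ffun i => nat_of_ord (t i)] S)
    let T : mi n.+1 := [ffun i => nat_of_ord (t i)] in
    ((-1) ^+ T ord0 * poch z (msum (msub (madd P S) T)) * (mfact T)%:R
       / (poch z (msum P) * poch z (msum S))
       * (mbinom P T)%:R * (mbinom S T)%:R)
    *: fPQ (msub (madd P R') T) (msub (madd Q S) T).

(* f_{r,A,B} = f_{P,Q} with P = (m-|A|, A), Q = (m-|B|, B), m = max(|A|,|B|) *)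
Definition ext (a0 : nat) (A : mi n) : mi n.+1 :=
  [ffun i => match unlift ord0 i with None => a0 | Some j => A j end].
Definition embP (k : mi n * mi n) : mi n.+1 :=
  ext (maxn (msum k.1) (msum k.2) - msum k.1) k.1.
Definition embQ (k : mi n * mi n) : mi n.+1 :=
  ext (maxn (msum k.1) (msum k.2) - msum k.2) k.2.

Definition star (hbar : C) (a b : PD) : PD :=
  \sum_(k <- msupp a) \sum_(l <- msupp b)
     (a@_k * b@_l) *: starPQ hbar (embP k) (embQ k) (embP l) (embQ l).

(* continuity of *_hbar : P(D_n) x P(D_n) -> P(D_n) for the locally convex
   topology generated by the norms ||.||_{D_n,rho}, rho > 0 (product topology
   on the source), written with the basic neighbourhoods of that topology:
   { x | ||x - x0||_{rho_i} < delta for finitely many rho_i }. *)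
Definition star_continuous (hbar : C) : Prop :=
  forall (a b : PD) (rho eps : R), 0 < rho -> 0 < eps ->
  exists (rhos : seq R) (delta : R),
    [/\ all (fun r => 0 < r) rhos, 0 < delta &
      forall a' b' : PD,
        (forall r, r \in rhos -> normD r (a' - a) < delta /\ normD r (b' - b) < delta) ->
        normD rho (star hbar a' b' - star hbar a b) < eps].

End Dn.

(* Main.v *)
Require Import Defs.
From HB Require Import structures.
From mathcomp Require Import all_boot all_order all_algebra.
From mathcomp Require Import reals.
From mathcomp Require Import complex.
From mathcomp Require Import finmap.
From mathcomp.multinomials Require Import monalg.
From mathcomp Require Import zify ring lra.
Import Order.TTheory GRing.Theory Num.Theory.
Local Open Scope ring_scope.

Section Proofs.
Variable R : realType.
Local Notation C := (R[i]).
Local Notation nc := (@Normc.normc R).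
Variable n : nat.
Local Notation K := (mi n * mi n)%type.
Local Notation PD := (PD R n).

Definition wt (k : K) : nat := msum (madd k.1 k.2).

Lemma eqle (x y : R) : x = y -> x <= y. Proof. by move->. Qed.

Lemma nc_ge0 (x : C) : 0 <= nc x.
Proof. by case: x => a b; rewrite /Normc.normc sqrtr_ge0. Qed.

Lemma normD_incl r (a : PD) (S : {fset K}) : (msupp a `<=` S)%fset ->
  normD r a = \sum_(k <- S) nc (a@_k) * r ^+ wt k.
Proof.
move=> sub; rewrite /normD; apply: big_fset_incl => // k _ kn.
by rewrite mcoeff_outdom // Normc.normc0 mul0r.
Qed.

Lemma normD_ge0 r (a : PD) : 0 <= r -> 0 <= normD r a.
Proof. by move=> r0; apply: sumr_ge0 => k _; rewrite mulr_ge0 ?nc_ge0 ?exprn_ge0. Qed.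

Lemma normD0 r : normD r (0 : PD) = 0.
Proof. by rewrite (normD_incl r _ fset0) ?big_seq_fset0 // msupp0. Qed.

Lemma normDD r (a b : PD) : 0 <= r -> normD r (a + b) <= normD r a + normD r b.
Proof.
move=> r0; set S := (msupp a `|` msupp b)%fset.
rewrite (normD_incl r _ S) ?msuppD_le // (normD_incl r _ S) ?fsubsetUl //.
rewrite (normD_incl r _ S) ?fsubsetUr // -big_split /=.
apply: ler_sum => k _; rewrite mcoeffD -mulrDl ler_wpM2r ?exprn_ge0 //.
exact: le_normcD.
Qed.

Lemma normDZ r c (a : PD) : normD r (c *: a) = nc c * normD r a.
Proof.
rewrite (normD_incl r _ (msupp a)) ?msuppZ_le // /normD mulr_sumr.
by apply: eq_bigr => k _; rewrite mcoeffZ Normc.normcM mulrA.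
Qed.

Lemma normD_sum r (I : Type) (s : seq I) (P : pred I) (F : I -> PD) : 0 <= r ->
  normD r (\sum_(i <- s | P i) F i) <= \sum_(i <- s | P i) normD r (F i).
Proof.
move=> r0; elim/big_rec2: _ => [|i y1 y2 _ IH]; first by rewrite normD0.
by apply: le_trans (normDD _ _ _ r0) _; rewrite lerD2l.
Qed.


Lemma msum_madd k (A B : mi k) : msum (madd A B) = (msum A + msum B)%N.
Proof. by rewrite /msum -big_split /=; apply: eq_bigr => i _; rewrite ffunE. Qed.

Lemma msum_munit (l : 'I_n) : msum (munit l) = 1%N.
Proof.
rewrite /msum (bigD1 l) //= big1 ?ffunE ?eqxx // => i /negbTE il.
by rewrite ffunE il.
Qed.

Lemma wt_unit A B (l : 'I_n) :
  wt (madd A (munit l), madd B (munit l)) = (wt (A, B)).+2.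
Proof.
rewrite /wt /= !msum_madd msum_munit.
lia.
Qed.

Lemma hexp_bound r j A B : 0 <= r ->
  normD r (hexp R j A B) <= (1 + n%:R * r ^+ 2) ^+ j * r ^+ wt (A, B).
Proof.
move=> r0; elim: j A B => [|j IH] A B /=.
  rewrite /fr (normD_incl r _ [fset (A, B)]%fset) ?msuppU_le //.
  by rewrite big_seq_fset1 mcoeffUU Normc.normc1 !mul1r.
apply: le_trans (normDD _ _ _ r0) _.
apply: le_trans (lerD (IH A B) (normD_sum _ _ _ _ _ r0)) _.
apply: le_trans (lerD (lexx _) (ler_sum _ (fun l _ => IH _ _))) _.
under eq_bigr => l _ do rewrite wt_unit.
rewrite sumr_const card_ord; apply: eqle; rewrite -[X in _ + X = _]mulr_natr !exprS; ring.
Qed.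

Lemma expW (x : R) m k : 1 <= x -> (m <= k)%N -> x ^+ m <= x ^+ k.
Proof. by move=> x1 mk; apply: ler_weXn2l. Qed.

Lemma msum_tail (P : mi n.+1) : (msum (mtail P) <= msum P)%N.
Proof.
rewrite [X in (_ <= X)%N]/msum big_ord_recl /msum.
under eq_bigr do rewrite ffunE.
exact: leq_addl.
Qed.

Definition Bc (r : R) := (1 + n%:R * r ^+ 2) * r.

Lemma Bc_ge1 r : 1 <= r -> 1 <= Bc r.
Proof.
move=> r1; rewrite /Bc -[X in X <= _]mulr1; apply: ler_pM => //.
by rewrite lerDl mulr_ge0 ?exprn_ge0 // (le_trans ler01).
Qed.

Lemma fPQ_bound r (P Q : mi n.+1) : 1 <= r ->
  normD r (fPQ R P Q) <= Bc r ^+ (msum P + msum Q).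
Proof.
move=> r1; have r0 : 0 <= r by apply: le_trans r1.
rewrite /fPQ; apply: le_trans (hexp_bound _ _ _ _ r0) _.
rewrite /Bc exprMn; apply: ler_pM; rewrite ?exprn_ge0 //.
- by rewrite addr_ge0 // mulr_ge0 ?exprn_ge0.
- apply: expW; first by rewrite lerDl mulr_ge0 ?exprn_ge0.
  lia.
- apply: expW => //; rewrite /wt msum_madd /=.
  by apply: leq_add; apply: msum_tail.
Qed.

Lemma ncD (x y : C) : nc (x + y) <= nc x + nc y.
Proof. exact: le_normcD. Qed.

Lemma ncN (x : C) : nc (- x) = nc x.
Proof. exact: normcN. Qed.

Lemma nc_nat k : nc (k%:R : C) = k%:R.
Proof. by rewrite normcMn Normc.normc1. Qed.

Lemma ncX (x : C) k : nc (x ^+ k) = nc x ^+ k.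
Proof. by elim: k => [|k IH]; rewrite ?expr0 ?Normc.normc1 // !exprS Normc.normcM IH. Qed.

Lemma ncDn (z : C) m : nc (z + m%:R) <= nc z + m%:R.
Proof. apply: le_trans (ncD _ _) _; rewrite lerD2l; apply: eqle; exact: nc_nat. Qed.

Lemma ncBn (z : C) m : m%:R - nc z <= nc (z + m%:R).
Proof.
have h := ncD (z + m%:R) (- z); rewrite ncN in h.
have e : nc ((z + m%:R) + - z) = m%:R by rewrite addrC addKr; exact: nc_nat.
by rewrite e in h; rewrite lerBlDr.
Qed.

Lemma poch_S (z : C) m : poch z m.+1 = poch z m * (z + m%:R).
Proof. by rewrite /poch big_ord_recr. Qed.

Lemma poch_up (z : C) m : nc (poch z m) <= (nc z + 1) ^+ m * (m`!)%:R.
Proof.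
elim: m => [|m IH]; first by rewrite /poch big_ord0 Normc.normc1 expr0 mul1r.
rewrite poch_S Normc.normcM factS natrM exprS.
have h : nc (z + m%:R) <= (nc z + 1) * (m.+1)%:R.
  apply: le_trans (ncDn _ _) _.
  have := nc_ge0 z; have : (0 <= m%:R :> R) by [].
  rewrite -natr1 => ? ?; nra.
have := nc_ge0 (z + m%:R); have := nc_ge0 (poch z m).
have : 0 <= (nc z + 1) ^+ m * (m`!)%:R by rewrite mulr_ge0 ?exprn_ge0 ?addr_ge0 ?nc_ge0.
move=> *; apply: le_trans (ler_pM _ _ IH h) _ => //.
by apply: eqle; ring.
Qed.

Lemma poch_low (z : C) c : 0 <= c ->
  (forall k, c * (k.+1)%:R <= nc (z + k%:R)) ->
  forall m, c ^+ m * (m`!)%:R <= nc (poch z m).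
Proof.
move=> c0 hc; elim=> [|m IH]; first by rewrite /poch big_ord0 Normc.normc1 expr0 mul1r.
rewrite poch_S Normc.normcM factS natrM exprS.
apply: le_trans (ler_pM _ _ IH (hc m)) => //; last first.
  by rewrite mulr_ge0 // ler0n.
  by rewrite mulr_ge0 ?exprn_ge0 // ler0n.
by apply: eqle; ring.
Qed.

Lemma foldr_min_le (s : seq R) d : foldr Num.min d s <= d.
Proof. by elim: s => //= x s IH; rewrite ge_min IH orbT. Qed.

Lemma foldr_min_mem (s : seq R) d x : x \in s -> foldr Num.min d s <= x.
Proof.
elim: s => //= y s IH; rewrite in_cons => /orP[/eqP->|xs].
  by rewrite ge_min lexx.
by rewrite ge_min IH ?orbT.
Qed.

Lemma foldr_min_gt0 (s : seq R) d : 0 < d -> all (fun x => 0 < x) s ->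
  0 < foldr Num.min d s.
Proof.
move=> d0; elim: s => //= x s IH /andP[x0 /IH h].
by rewrite lt_min x0 h.
Qed.

Lemma exists_c (z : C) : (forall k, z + k%:R != 0) ->
  exists c, [/\ 0 < c, c <= 1 & forall k, c * (k.+1)%:R <= nc (z + k%:R)].
Proof.
move=> hz.
pose K0 := Num.bound (2 * nc z + 1).
have hK0 : 2 * nc z + 1 < K0%:R.
  by apply: archi_boundP; rewrite addr_ge0 ?mulr_ge0 ?nc_ge0.
pose q k := nc (z + k%:R) / (k.+1)%:R.
have qpos : forall k, 0 < q k.
  move=> k; rewrite /q divr_gt0 ?ltr0Sn // lt_def nc_ge0 andbT.
  by apply/eqP => /Normc.eq0_normc /eqP; rewrite (negbTE (hz k)).
pose c := foldr Num.min (1/2) [seq q k | k <- iota 0 K0].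
have c0 : 0 < c.
  apply: foldr_min_gt0; first by rewrite divr_gt0 ?ltr0Sn.
  by apply/allP => x /mapP[k _ ->].
have c12 : c <= 1/2 := foldr_min_le _ _.
exists c; split => //.
  by apply: le_trans c12 _; rewrite ler_pdivrMr ?ltr0Sn // mul1r ler1n.
move=> k; case: (ltnP k K0) => kK.
  have : c <= q k by apply: foldr_min_mem; apply: map_f; rewrite mem_iota add0n kK.
  by rewrite /q ler_pdivlMr ?ltr0Sn.
have h1 : k%:R - nc z <= nc (z + k%:R).
  exact: ncBn.
have h2 : (K0%:R : R) <= k%:R by rewrite ler_nat.
have := nc_ge0 z; rewrite -natr1 => hz0.
have : c * (k%:R + 1) <= 1/2 * (k%:R + 1).
  by rewrite ler_wpM2r // addr_ge0 ?ler0n.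
move=> h3; apply: le_trans h3 _; apply: le_trans h1; lra.
Qed.

Lemma fact_add a b : (a`! * b`! <= (a + b)`!)%N.
Proof.
have := bin_fact (leq_addr b a); rewrite addKn => <-.
by rewrite leq_pmull // bin_gt0 leq_addr.
Qed.

Lemma bin_le2 m k : ('C(m, k) <= 2 ^ m)%N.
Proof.
elim: m k => [|m IH] [|k] //; first by rewrite bin0 expn_gt0.
by rewrite binS expnS mul2n -addnn leq_add.
Qed.

Lemma mfact_le k (T : mi k) : (mfact T <= (msum T)`!)%N.
Proof.
rewrite /mfact /msum.
apply: (big_ind2 (fun a b => a <= b`!)%N) => // a1 a2 b1 b2 h1 h2.
by apply: leq_trans (fact_add _ _); apply: leq_mul.
Qed.

Lemma mbinom_le k (P T : mi k) : (mbinom P T <= 2 ^ msum P)%N.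
Proof.
rewrite /mbinom /msum.
apply: (big_ind2 (fun a b => a <= 2 ^ b)%N) => // [a1 a2 b1 b2 h1 h2|i _].
  by rewrite expnD; apply: leq_mul.
exact: bin_le2.
Qed.

Lemma msum_msub k (P S T : mi k) : mle T P ->
  (msum (msub (madd P S) T) + msum T = msum P + msum S)%N.
Proof.
move=> /forallP hT; rewrite -msum_madd /msum -big_split /=.
apply: eq_bigr => i _; rewrite !ffunE subnK //.
by apply: leq_trans (hT i) (leq_addr _ _).
Qed.

Lemma coef_nat k (P S T : mi k) : mle T P ->
  ((msum (msub (madd P S) T))`! * mfact T * mbinom P T * mbinom S T
   <= 2 ^ (msum P + msum S) * 2 ^ (msum P + msum S) * ((msum P)`! * (msum S)`!))%N.
Proof.
move=> hT; have hu := @msum_msub k P S T hT.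
set u := msum (msub _ _) in hu *.
have e1 : ((u`! * mfact T) <= (msum P + msum S)`!)%N.
  by rewrite -hu; apply: leq_trans (fact_add _ _); rewrite leq_mul2l mfact_le orbT.
have e2 : ((msum P + msum S)`! <= 2 ^ (msum P + msum S) * ((msum P)`! * (msum S)`!))%N.
  have := bin_fact (leq_addr (msum S) (msum P)); rewrite addKn => <-.
  by rewrite leq_mul2r bin_le2 orbT.
have e3 : (mbinom P T * mbinom S T <= 2 ^ (msum P + msum S))%N.
  by rewrite expnD; apply: leq_mul; apply: mbinom_le.
rewrite -mulnA; apply: leq_trans (leq_mul (leq_trans e1 e2) e3) _.
by rewrite mulnC mulnA.
Qed.

Lemma coef_bound (z : C) c (P S T : mi n.+1) : 0 < c ->
  (forall k, c * (k.+1)%:R <= nc (z + k%:R)) -> mle T P ->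
  nc ((-1) ^+ T ord0 * poch z (msum (msub (madd P S) T)) * (mfact T)%:R
       / (poch z (msum P) * poch z (msum S))
       * (mbinom P T)%:R * (mbinom S T)%:R)
  <= (4 * (nc z + 1) / c) ^+ (msum P + msum S).
Proof.
move=> c0 hc hT.
rewrite !Normc.normcM Normc.normcV Normc.normcM ncX ncN Normc.normc1 expr1n mul1r.
rewrite !nc_nat.
have hu := @msum_msub _ P S T hT.
set u := msum (msub _ _) in hu *.
set m1 := msum P in hu *; set m2 := msum S in hu *.
set M := (m1 + m2)%N.
set a := nc z + 1.
have a1 : 1 <= a by rewrite lerDr nc_ge0.
have a0 : 0 <= a by apply: le_trans a1.
set F := (mfact T * mbinom P T * mbinom S T)%N.
have hc0 : 0 <= c by apply: ltW.
have hp1 := poch_low z c hc0 hc m1.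
have hp2 := poch_low z c hc0 hc m2.
have hden : c ^+ M * ((m1`! * m2`!)%N)%:R <= nc (poch z m1) * nc (poch z m2).
  rewrite exprD natrM mulrACA; apply: ler_pM => //.
    by rewrite mulr_ge0 ?exprn_ge0 ?ler0n.
  by rewrite mulr_ge0 ?exprn_ge0 ?ler0n.
have hdp : 0 < c ^+ M * ((m1`! * m2`!)%N)%:R.
  by rewrite mulr_gt0 ?exprn_gt0 // ltr0n muln_gt0 !fact_gt0.
have hup : nc (poch z u) <= a ^+ M * (u`!)%:R.
  apply: le_trans (poch_up z u) _; apply: ler_wpM2r; first by rewrite ler0n.
  by apply: expW => //; rewrite /M -hu leq_addr.
have hnat : ((u`! * F)%N)%:R <= ((2 ^ M * 2 ^ M * (m1`! * m2`!))%N)%:R :> R.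
  by rewrite ler_nat /F; move: (@coef_nat _ P S T hT); rewrite !mulnA.
have -> : nc (poch z u) * (mfact T)%:R / (nc (poch z m1) * nc (poch z m2)) *
   (mbinom P T)%:R * (mbinom S T)%:R
   = nc (poch z u) * F%:R / (nc (poch z m1) * nc (poch z m2)).
  by rewrite /F !natrM; ring.
have dpos := lt_le_trans hdp hden.
rewrite ler_pdivrMr //.
apply: le_trans (_ : _ <= a ^+ M * ((u`! * F)%N)%:R) _.
  rewrite natrM mulrA; apply: ler_wpM2r; first by rewrite ler0n.
  exact: hup.
apply: le_trans (_ : _ <= a ^+ M * ((2 ^ M * 2 ^ M * (m1`! * m2`!))%N)%:R) _.
  by apply: ler_wpM2l; rewrite ?exprn_ge0.
apply: le_trans (_ : _ <= (4 * a / c) ^+ M * (c ^+ M * ((m1`! * m2`!)%N)%:R)) _.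
  apply: eqle; rewrite mulrA -exprMn divfK ?gt_eqF //.
  have e4 : (4 : R) = 2 * 2 by rewrite -natrM.
  by rewrite !natrM !natrX e4 !exprMn; ring.
by apply: ler_wpM2l => //; rewrite exprn_ge0 // divr_ge0 // mulr_ge0.
Qed.

Lemma msum_sub_le k (A B T : mi k) : (msum (msub (madd A B) T) <= msum A + msum B)%N.
Proof.
rewrite -msum_madd /msum; apply: leq_sum => i _; rewrite !ffunE; exact: leq_subr.
Qed.

Lemma starPQ_bound (hbar : C) r c (P Q R' S : mi n.+1) : 1 <= r -> 0 < c ->
  (forall k, c * (k.+1)%:R <= nc (1 / (2 * hbar) + k%:R)) ->
  normD r (starPQ hbar P Q R' S) <=
  ((msum P).+1 ^ n.+1)%:R * ((4 * (nc (1 / (2 * hbar)) + 1) / c) ^+ (msum P + msum S)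
    * Bc r ^+ (msum P + msum R' + (msum Q + msum S))).
Proof.
move=> r1 c0 hc; have r0 : 0 <= r by apply: le_trans r1.
rewrite /starPQ; cbv zeta.
apply: le_trans (normD_sum _ _ _ _ _ r0) _.
rewrite big_mkcond /=.
set X := ((4 * (nc (1 / (2 * hbar)) + 1) / c) ^+ (msum P + msum S)
    * Bc r ^+ (msum P + msum R' + (msum Q + msum S))).
apply: le_trans (_ : _ <= \sum_(t : {ffun 'I_n.+1 -> 'I_(msum P).+1}) X) _; last first.
  by rewrite sumr_const card_ffun !card_ord mulr_natl.
apply: ler_sum => t _; case: ifP => [/andP[hP hS]|_]; last first.
  have h4 : 0 < 4 * (nc (1 / (2 * hbar)) + 1).
    by rewrite mulr_gt0 // ltr_wpDl ?nc_ge0 ?ltr01.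
  have hB : 0 <= Bc r by apply: le_trans (Bc_ge1 _ r1).
  by rewrite /X; apply: mulr_ge0; apply: exprn_ge0 => //; apply: divr_ge0; apply: ltW.
rewrite normDZ; apply: ler_pM; rewrite ?nc_ge0 ?normD_ge0 //.
  exact: coef_bound.
apply: le_trans (fPQ_bound _ _ _ r1) _; apply: expW; first exact: Bc_ge1.
by apply: leq_add; apply: msum_sub_le.
Qed.

Lemma msum_ext a0 (A : mi n) : msum (ext a0 A) = (a0 + msum A)%N.
Proof.
rewrite /msum big_ord_recl !ffunE unlift_none; congr (_ + _)%N.
by apply: eq_bigr => i _; rewrite ffunE liftK.
Qed.

Lemma msum_embP (k : K) : (msum (embP k) <= wt k)%N.
Proof.
rewrite /embP msum_ext subnK ?leq_maxl // /wt msum_madd geq_max.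
by rewrite leq_addr leq_addl.
Qed.

Lemma msum_embQ (k : K) : (msum (embQ k) <= wt k)%N.
Proof.
rewrite /embQ msum_ext subnK ?leq_maxr // /wt msum_madd geq_max.
by rewrite leq_addr leq_addl.
Qed.

Definition Ec (hbar : C) c r : R :=
  2 ^+ n.+1 * (4 * (nc (1 / (2 * hbar)) + 1) / c) * Bc r ^+ 2.

Lemma Ec_ge0 hbar c r : 0 < c -> 1 <= r -> 0 <= Ec hbar c r.
Proof.
move=> c0 r1; rewrite /Ec; apply: mulr_ge0; last by rewrite exprn_ge0 // (le_trans ler01) // Bc_ge1.
apply: mulr_ge0; first by rewrite exprn_ge0.
by apply: divr_ge0; [rewrite mulr_ge0 // addr_ge0 ?nc_ge0 | apply: ltW].
Qed.

Lemma starPQ_emb (hbar : C) r c (k l : K) : 1 <= r -> 0 < c -> c <= 1 ->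
  (forall k, c * (k.+1)%:R <= nc (1 / (2 * hbar) + k%:R)) ->
  normD r (starPQ hbar (embP k) (embQ k) (embP l) (embQ l)) <=
  Ec hbar c r ^+ (wt k + wt l).
Proof.
move=> r1 c0 c1 hc.
apply: le_trans (starPQ_bound _ _ _ _ _ _ _ r1 c0 hc) _.
set D := 4 * (nc (1 / (2 * hbar)) + 1) / c.
set w := (wt k + wt l)%N.
have hk1 := msum_embP k; have hk2 := msum_embQ k.
have hl1 := msum_embP l; have hl2 := msum_embQ l.
have D1 : 1 <= D.
  rewrite /D ler_pdivlMr // (mul1r c); apply: le_trans c1 _.
  rewrite -[X in X <= _]mulr1; apply: ler_pM => //.
    by rewrite (natrD _ 3 1) lerDr ler0n.
  by rewrite lerDr nc_ge0.
have B1 := Bc_ge1 _ r1.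
have hN : ((msum (embP k)).+1 ^ n.+1 <= (2 ^ n.+1) ^ w)%N.
  apply: (@leq_trans ((2 ^ msum (embP k)) ^ n.+1)).
    by rewrite leq_exp2r // ltn_expl.
  rewrite -expnM mulnC expnM; apply: leq_pexp2l; first by rewrite expn_gt0.
  by rewrite /w; apply: leq_trans hk1 (leq_addr _ _).
rewrite /Ec -/D (exprMn _ ((2 : R) ^+ n.+1 * D)) (exprMn _ ((2 : R) ^+ n.+1) D) -mulrA.
apply: ler_pM.
- by rewrite ler0n.
- by rewrite mulr_ge0 // exprn_ge0 // (le_trans ler01).
- by rewrite -natrX -natrX ler_nat.
apply: ler_pM.
- by rewrite exprn_ge0 // (le_trans ler01).
- by rewrite exprn_ge0 // (le_trans ler01).
- by apply: expW => //; rewrite /w leq_add.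
rewrite -exprM; apply: expW => //.
rewrite /w; lia.
Qed.

Lemma Ec_gt0 hbar c r : 0 < c -> 1 <= r -> 0 < Ec hbar c r.
Proof.
move=> c0 r1; rewrite /Ec; apply: mulr_gt0; last first.
  by rewrite exprn_gt0 // (lt_le_trans ltr01) // Bc_ge1.
apply: mulr_gt0; first by rewrite exprn_gt0.
by apply: divr_gt0 => //; rewrite mulr_gt0 // ltr_wpDl ?nc_ge0 ?ltr01.
Qed.

Lemma normD_mono r1 r2 (a : PD) : 0 <= r1 -> r1 <= r2 -> normD r1 a <= normD r2 a.
Proof.
move=> h1 h12; rewrite /normD; apply: ler_sum => k _.
by apply: ler_wpM2l; rewrite ?nc_ge0 // lerXn2r // ?nnegrE // (le_trans h1).
Qed.

Definition FF (hbar : C) (k l : K) : PD :=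
  starPQ hbar (embP k) (embQ k) (embP l) (embQ l).

Lemma star_incl hbar (a b : PD) (S T : {fset K}) :
  (msupp a `<=` S)%fset -> (msupp b `<=` T)%fset ->
  star hbar a b = \sum_(k <- S) \sum_(l <- T) (a@_k * b@_l) *: FF hbar k l.
Proof.
move=> sa sb; rewrite /star (@big_fset_incl _ _ _ _ _ _ _ sa); last first.
  by move=> k _ kn; rewrite big1 // => l _; rewrite mcoeff_outdom // mul0r scale0r.
apply: eq_bigr => k _; rewrite (@big_fset_incl _ _ _ _ _ _ _ sb) //.
by move=> l _ ln; rewrite (mcoeff_outdom ln) mulr0 scale0r.
Qed.

Lemma coef_diff (x' x y' y : C) :
  nc (x' * y' - x * y) <= nc (x' - x) * (nc y + nc (y' - y)) + nc x * nc (y' - y).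
Proof.
have -> : x' * y' - x * y = (x' - x) * y' + x * (y' - y) by ring.
apply: le_trans (ncD _ _) _; rewrite !Normc.normcM lerD2r.
apply: ler_wpM2l; first exact: nc_ge0.
have e : nc y' = nc (y + (y' - y)) by rewrite addrC subrK.
by rewrite e; apply: ncD.
Qed.

Lemma star_diff hbar E rho (a a' b b' : PD) : 0 <= rho -> 0 <= E ->
  (forall k l, normD rho (FF hbar k l) <= E ^+ (wt k + wt l)) ->
  normD rho (star hbar a' b' - star hbar a b) <=
  normD E (a' - a) * (normD E b + normD E (b' - b)) + normD E a * normD E (b' - b).
Proof.
move=> r0 E0 hF.
set S := (msupp a' `|` msupp a)%fset; set T := (msupp b' `|` msupp b)%fset.
rewrite (star_incl _ _ _ S T) ?fsubsetUl // (star_incl _ _ _ S T) ?fsubsetUr //.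
rewrite -sumrB.
under eq_bigr do rewrite -sumrB.
under eq_bigr do under eq_bigr do rewrite -scalerBl.
rewrite (normD_incl E (a' - a) S) ?msuppB_le // (normD_incl E b T) ?fsubsetUr //.
rewrite (normD_incl E (b' - b) T) ?msuppB_le // (normD_incl E a S) ?fsubsetUr //.
apply: le_trans (normD_sum _ _ _ _ _ r0) _.
rewrite -big_split /= !mulr_suml -big_split /=.
apply: ler_sum => k _.
apply: le_trans (normD_sum _ _ _ _ _ r0) _.
rewrite !mulr_sumr -big_split /=.
apply: ler_sum => l _.
rewrite normDZ.
apply: le_trans (ler_wpM2l (nc_ge0 _) (hF k l)) _.
apply: le_trans (ler_wpM2r (exprn_ge0 _ E0) (coef_diff _ _ _ _)) _.
rewrite !mcoeffB exprD; apply: eqle; ring.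
Qed.

Lemma inH_nz (hbar : R[i]) : inH hbar -> forall k : nat, 1 / (2 * hbar) + k%:R != 0.
Proof.
move=> [h0 hH] k; apply/eqP => e.
have h2 : (2 : R[i]) != 0 by rewrite pnatr_eq0.
case: k e => [|k] e.
  move: e; rewrite addr0 => /eqP; rewrite mul1r invr_eq0 mulf_eq0 (negbTE h2).
  by rewrite (negbTE h0).
have hk : (k.+1%:R : R[i]) != 0 by rewrite pnatr_eq0.
have := hH k.+1 (ltn0Sn k); apply/negP; rewrite negbK; apply/eqP.
have e' : 1 = - k.+1%:R * (2 * hbar).
  have : 1 / (2 * hbar) * (2 * hbar) = 1 by rewrite mul1r mulVf // mulf_neq0.
  by move=> {1}<-; congr (_ * _); rewrite -[1 / _](addrK k.+1%:R) e sub0r.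
apply: (mulIf (mulf_neq0 h2 hk)).
have -> : hbar * (2 * k.+1%:R) = - (- k.+1%:R * (2 * hbar)) by ring.
by rewrite -e' mulNr div1r mulVf // mulf_neq0.
Qed.

End Proofs.

Theorem theorem3p7 (R : realType) (n : nat) (hbar : R[i]) :
  (1 <= n)%N -> inH hbar -> star_continuous n hbar.
Proof.
move=> _ hH a b rho eps rho0 eps0.
have hz : forall k : nat, 1 / (2 * hbar) + k%:R != 0 by exact: inH_nz.
have [c [c0 c1 hc]] := @exists_c R _ hz.
have r1 : 1 <= rho + 1 by rewrite lerDr ltW.
set E := @Ec R n hbar c (rho + 1).
have E0 : 0 < E by apply: Ec_gt0.
set al := normD E a; set be := normD E b.
have al0 : 0 <= al by apply: normD_ge0; apply: ltW.
have be0 : 0 <= be by apply: normD_ge0; apply: ltW.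
set d := eps / (al + be + eps + 2).
have hpos : 0 < al + be + eps + 2.
  lra.
have d0 : 0 < d by rewrite divr_gt0.
have dE : d * (al + be + eps + 2) = eps by rewrite divfK // gt_eqF.
have d1 : d < eps + 2.
  have h : d * (eps + 2) <= d * (al + be + eps + 2).
    apply: ler_wpM2l; [exact: ltW | lra].
  rewrite dE in h; nra.
exists [:: E], d; split => //=; first by rewrite E0.
move=> a' b' hyp; have [ha hb] := hyp E (mem_head _ _).
have hF : forall k l, normD (rho + 1) (@FF R n hbar k l) <= E ^+ (@wt n k + @wt n l).
  by move=> k l; apply: starPQ_emb.
have hr : rho <= rho + 1 by lra.
apply: le_lt_trans (@normD_mono R n _ _ _ (ltW rho0) hr) _.
apply: le_lt_trans (@star_diff R n _ _ _ _ _ _ _ (le_trans ler01 r1) (ltW E0) hF) _.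
rewrite -/al -/be.
set da := normD E (a' - a) in ha *; set db := normD E (b' - b) in hb *.
have da0 : 0 <= da by apply: normD_ge0; apply: ltW.
have db0 : 0 <= db by apply: normD_ge0; apply: ltW.
have h1 : da * (be + db) <= d * (be + d).
  by apply: ler_pM; lra.
have h2 : al * db <= al * d by rewrite ler_wpM2l // ltW.
apply: le_lt_trans (lerD h1 h2) _.
rewrite -dE; nra.
Qed.
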